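(* Let $G_1$ and $G_2$ be TRVGs with $V(G_1)\cap V(G_2)=\{v\}$. Suppose that for each $i\in\{1,2\}$ there is a rectangle representation of $G_i$ in which the rectangle for $v$ sees no other rectangle in one of the two directions (i.e., either no horizontal line or no vertical line meets the interiors of both the rectangle for $v$ and another rectangle of the representation). Then $G_1\cup G_2=(V(G_1)\cup V(G_2),E(G_1)\cup E(G_2))$ is a TRVG.
   Context: A graph $G$ is a transparent rectangle visibility graph (TRVG) if its vertices can be represented by a collection of pairwise non-overlapping rectangles in the plane whose sides are parallel to the coordinate axes, one per vertex, such that two distinct vertices are adjacent if and only if there is a horizontal or a vertical line intersecting the interiors of both of their rectangles (other rectangles do not block visibility). Two rectangles see each other horizontally (resp. vertically) if some horizontal (resp. vertical) line meets the interiors of both. *)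

(* Defs.v *)
From HB Require Import structures.
From mathcomp Require Import all_boot all_order all_algebra.
From mathcomp Require Import Rstruct.
Set Implicit Arguments. Unset Strict Implicit. Unset Printing Implicit Defensive.
Import Order.TTheory GRing.Theory Num.Theory.
Local Open Scope ring_scope.

(* An axis-parallel rectangle [x1,x2] x [y1,y2] in the plane, stored as
   ((x1, x2), (y1, y2)). *)
Notation R := Rdefinitions.R.
Definition rect := ((R * R) * (R * R))%type.

Definition rx1 (r : rect) : R := r.1.1.
Definition rx2 (r : rect) : R := r.1.2.
Definition ry1 (r : rect) : R := r.2.1.
Definition ry2 (r : rect) : R := r.2.2.

Definition rect_ok (r : rect) : Prop := rx1 r < rx2 r /\ ry1 r < ry2 r.

Definition in_interior (r : rect) (p q : R) : Prop :=
  rx1 r < p < rx2 r /\ ry1 r < q < ry2 r.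

Definition non_overlapping (r s : rect) : Prop :=
  forall p q : R, ~ (in_interior r p q /\ in_interior s p q).

Definition sees_h (r s : rect) : Prop :=
  exists c : R, ry1 r < c < ry2 r /\ ry1 s < c < ry2 s.

Definition sees_v (r s : rect) : Prop :=
  exists c : R, rx1 r < c < rx2 r /\ rx1 s < c < rx2 s.

Definition sees (r s : rect) : Prop := sees_h r s \/ sees_v r s.

Definition simple_graph (T : finType) (A : {set T}) (E : rel T) : Prop :=
  (forall x y, E x y = E y x) /\
  (forall x, ~~ E x x) /\
  (forall x y, E x y -> (x \in A) && (y \in A)).

Definition trv_rep (T : finType) (A : {set T}) (E : rel T) (f : T -> rect)
  : Prop :=
  (forall x, x \in A -> rect_ok (f x)) /\
  (forall x y, x \in A -> y \in A -> x != y -> non_overlapping (f x) (f y)) /\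
  (forall x y, x \in A -> y \in A -> x != y -> (E x y <-> sees (f x) (f y))).

Definition is_TRVG (T : finType) (A : {set T}) (E : rel T) : Prop :=
  exists f : T -> rect, trv_rep A E f.

Definition blind_in_some_direction (T : finType) (A : {set T})
  (f : T -> rect) (v : T) : Prop :=
  (forall w, w \in A -> w != v -> ~ sees_h (f v) (f w)) \/
  (forall w, w \in A -> w != v -> ~ sees_v (f v) (f w)).

(* Main.v *)
Require Import Defs.
From mathcomp Require Import all_boot all_order all_algebra.
From mathcomp Require Import Rstruct lra.
Set Implicit Arguments. Unset Strict Implicit. Unset Printing Implicit Defensive.
Import Order.TTheory GRing.Theory Num.Theory.
Local Open Scope ring_scope.

Lemma ovE (a b c d : R) : a < b -> c < d ->
  (exists t, a < t < b /\ c < t < d) <-> (a < d /\ c < b).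
Proof.
move=> h1 h2; split.
  by move=> [t [/andP[h3 h4] /andP[h5 h6]]]; split; lra.
move=> [h3 h4].
have [h|h] := leP a c; have [h'|h'] := leP b d.
- by exists ((c + b)/2); split; apply/andP; split; lra.
- by exists ((c + d)/2); split; apply/andP; split; lra.
- by exists ((a + b)/2); split; apply/andP; split; lra.
- by exists ((a + d)/2); split; apply/andP; split; lra.
Qed.

Lemma sees_hE r s : rect_ok r -> rect_ok s ->
  sees_h r s <-> (ry1 r < ry2 s /\ ry1 s < ry2 r).
Proof. by move=> [_ h1] [_ h2]; apply: ovE. Qed.

Lemma sees_vE r s : rect_ok r -> rect_ok s ->
  sees_v r s <-> (rx1 r < rx2 s /\ rx1 s < rx2 r).
Proof. by move=> [h1 _] [h2 _]; apply: ovE. Qed.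

Lemma nonovE r s : non_overlapping r s <-> ~ (sees_v r s /\ sees_h r s).
Proof.
split.
  move=> H [[p [hp1 hp2]] [q [hq1 hq2]]]; apply: (H p q).
  by split; split.
by move=> H p q [[h1 h2] [h3 h4]]; apply: H; split; [exists p | exists q]; split.
Qed.

Lemma seesE r s : rect_ok r -> rect_ok s ->
  sees r s <-> ((ry1 r < ry2 s /\ ry1 s < ry2 r) \/ (rx1 r < rx2 s /\ rx1 s < rx2 r)).
Proof. by move=> h1 h2; rewrite /sees sees_hE // sees_vE. Qed.

Lemma nonovE' r s : rect_ok r -> rect_ok s ->
  non_overlapping r s <-> ~ ((ry1 r < ry2 s /\ ry1 s < ry2 r) /\ (rx1 r < rx2 s /\ rx1 s < rx2 r)).
Proof. by move=> h1 h2; rewrite nonovE sees_hE // sees_vE //; tauto. Qed.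

Definition tr (r : rect) : rect := ((r.2.1, r.2.2), (r.1.1, r.1.2)).

Lemma trv_tr (T : finType) (A : {set T}) E f :
  trv_rep A E f -> trv_rep A E (fun x => tr (f x)).
Proof.
move=> [h1 [h2 h3]]; split; [|split].
- by move=> x /h1 [a b]; split.
- move=> x y hx hy hxy; have := h2 x y hx hy hxy.
  by rewrite !nonovE /sees_v /sees_h /=; tauto.
- move=> x y hx hy hxy; rewrite h3 //.
  by rewrite /sees /sees_v /sees_h /=; tauto.
Qed.

Lemma is_TRVG_ext (T : finType) (A : {set T}) (E E' : rel T) :
  (forall x y, E x y = E' x y) -> is_TRVG A E -> is_TRVG A E'.
Proof.
move=> hE [f [h1 [h2 h3]]]; exists f; split; [|split] => //.
by move=> x y hx hy hxy; rewrite -hE; apply: h3.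
Qed.
Definition shy (r : rect) (t : R) : rect := ((r.1.1, r.1.2), (r.2.1 + t, r.2.2 + t)).
Definition shx (r : rect) (t : R) : rect := ((r.1.1 + t, r.1.2 + t), (r.2.1, r.2.2)).

Lemma rsimp1 r t : rx1 (shy r t) = rx1 r. Proof. by []. Qed.
Lemma rsimp2 r t : rx2 (shy r t) = rx2 r. Proof. by []. Qed.
Lemma rsimp3 r t : ry1 (shy r t) = ry1 r + t. Proof. by []. Qed.
Lemma rsimp4 r t : ry2 (shy r t) = ry2 r + t. Proof. by []. Qed.
Lemma rsimp5 r t : rx1 (shx r t) = rx1 r + t. Proof. by []. Qed.
Lemma rsimp6 r t : rx2 (shx r t) = rx2 r + t. Proof. by []. Qed.
Lemma rsimp7 r t : ry1 (shx r t) = ry1 r. Proof. by []. Qed.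
Lemma rsimp8 r t : ry2 (shx r t) = ry2 r. Proof. by []. Qed.
Lemma rsimp9 (a b c d : R) : rx1 ((a, b), (c, d)) = a. Proof. by []. Qed.
Lemma rsimp10 (a b c d : R) : rx2 ((a, b), (c, d)) = b. Proof. by []. Qed.
Lemma rsimp11 (a b c d : R) : ry1 ((a, b), (c, d)) = c. Proof. by []. Qed.
Lemma rsimp12 (a b c d : R) : ry2 ((a, b), (c, d)) = d. Proof. by []. Qed.
Definition rsimp := (rsimp1, rsimp2, rsimp3, rsimp4, rsimp5, rsimp6, rsimp7, rsimp8,
  rsimp9, rsimp10, rsimp11, rsimp12).

Lemma trueP (P : Prop) : (true /\ P) <-> P. Proof. by split=> [[]|]. Qed.
Lemma falseP (P : Prop) : (false /\ P) <-> False. Proof. by split=> [[]|]. Qed.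

Lemma sees_h_sym r s : sees_h r s <-> sees_h s r.
Proof. by split; move=> [c [h1 h2]]; exists c. Qed.
Lemma sees_v_sym r s : sees_v r s <-> sees_v s r.
Proof. by split; move=> [c [h1 h2]]; exists c. Qed.

Lemma bnd (c S : R) : `|c| <= S -> -S <= c /\ c <= S.
Proof. by rewrite ler_norml => /andP[]. Qed.

Lemma core (T : finType) (A1 A2 : {set T}) (E1 E2 : rel T) (v : T) f1 f2 :
  simple_graph A1 E1 -> simple_graph A2 E2 -> A1 :&: A2 = [set v] ->
  trv_rep A1 E1 f1 -> (forall w, w \in A1 -> w != v -> ~ sees_h (f1 v) (f1 w)) ->
  trv_rep A2 E2 f2 -> (forall w, w \in A2 -> w != v -> ~ sees_v (f2 v) (f2 w)) ->
  is_TRVG (A1 :|: A2) (fun x y => E1 x y || E2 x y).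
Proof.
move=> [sE1 [iE1 mE1]] [sE2 [iE2 mE2]] hI [ok1 [no1 ee1]] bl1 [ok2 [no2 ee2]] bl2.
have vA : v \in A1 :&: A2 by rewrite hI set11.
move: (vA); rewrite inE => /andP[vA1 vA2].
have both : forall x, x \in A1 -> x \in A2 -> x = v.
  by move=> x h1 h2; apply/set1P; rewrite -hI inE h1 h2.
pose term (w : T) := `|rx1 (f1 w)| + `|rx2 (f1 w)| + `|ry1 (f1 w)| + `|ry2 (f1 w)|
  + (`|rx1 (f2 w)| + `|rx2 (f2 w)| + `|ry1 (f2 w)| + `|ry2 (f2 w)|).
pose S := \sum_(w : T) term w.
have termS : forall w, term w <= S.
  move=> w; rewrite /S (bigD1 w) //= lerDl; apply: sumr_ge0 => i _.
  by rewrite /term; rewrite !addr_ge0.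
have B : forall w,
  [/\ (-S <= rx1 (f1 w) /\ rx1 (f1 w) <= S), (-S <= rx2 (f1 w) /\ rx2 (f1 w) <= S),
      (-S <= ry1 (f1 w) /\ ry1 (f1 w) <= S) & (-S <= ry2 (f1 w) /\ ry2 (f1 w) <= S)] /\
  [/\ (-S <= rx1 (f2 w) /\ rx1 (f2 w) <= S), (-S <= rx2 (f2 w) /\ rx2 (f2 w) <= S),
      (-S <= ry1 (f2 w) /\ ry1 (f2 w) <= S) & (-S <= ry2 (f2 w) /\ ry2 (f2 w) <= S)].
  move=> w; have := termS w; rewrite /term => h.
  have a1 := normr_ge0 (rx1 (f1 w)); have a2 := normr_ge0 (rx2 (f1 w)).
  have a3 := normr_ge0 (ry1 (f1 w)); have a4 := normr_ge0 (ry2 (f1 w)).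
  have a5 := normr_ge0 (rx1 (f2 w)); have a6 := normr_ge0 (rx2 (f2 w)).
  have a7 := normr_ge0 (ry1 (f2 w)); have a8 := normr_ge0 (ry2 (f2 w)).
  by split; split; apply: bnd; lra.
have Bx1 : forall w, (-S <= rx1 (f1 w) <= S) /\ (-S <= rx2 (f1 w) <= S).
  by move=> w; have [[[-> ->] [-> ->] _ _] _] := B w.
have By1 : forall w, (-S <= ry1 (f1 w) <= S) /\ (-S <= ry2 (f1 w) <= S).
  by move=> w; have [[_ _ [-> ->] [-> ->]] _] := B w.
have Bx2 : forall w, (-S <= rx1 (f2 w) <= S) /\ (-S <= rx2 (f2 w) <= S).
  by move=> w; have [_ [[-> ->] [-> ->] _ _]] := B w.
have By2 : forall w, (-S <= ry1 (f2 w) <= S) /\ (-S <= ry2 (f2 w) <= S).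
  by move=> w; have [_ [_ _ [-> ->] [-> ->]]] := B w.
clear B termS.
pose K := 2 * S + 1.
pose t1 w := if ry2 (f1 w) <= ry1 (f1 v) then - K else K.
pose t2 w := if rx2 (f2 w) <= rx1 (f2 v) then - K else K.
pose f x := if x == v then ((rx1 (f1 v), rx2 (f1 v)), (ry1 (f2 v), ry2 (f2 v)))
            else if x \in A1 then shy (f1 x) (t1 x) else shx (f2 x) (t2 x).
have fv : f v = ((rx1 (f1 v), rx2 (f1 v)), (ry1 (f2 v), ry2 (f2 v))) by rewrite /f eqxx.
have f1E : forall x, x \in A1 -> x != v -> f x = shy (f1 x) (t1 x).
  by move=> x h1 h2; rewrite /f (negbTE h2) h1.
have f2E : forall x, x \notin A1 -> x != v -> f x = shx (f2 x) (t2 x).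
  by move=> x h1 h2; rewrite /f (negbTE h2) (negbTE h1).
have Eeq : forall x y, x != y -> (E1 x y || E2 x y) <->
   ((x \in A1) && (y \in A1) /\ sees (f1 x) (f1 y)) \/ ((x \in A2) && (y \in A2) /\ sees (f2 x) (f2 y)).
  move=> x y hxy; split.
    case/orP => h.
      by left; have := mE1 _ _ h => /andP[hx hy]; rewrite hx hy -ee1.
    by right; have := mE2 _ _ h => /andP[hx hy]; rewrite hx hy -ee2.
  case=> [[/andP[hx hy] hs]|[/andP[hx hy] hs]]; apply/orP.
    by left; apply/ee1.
  by right; apply/ee2.
pose P x y := non_overlapping (f x) (f y) /\ ((E1 x y || E2 x y) <-> sees (f x) (f y)).
have Psym : forall x y, P x y -> P y x.
  move=> x y [h1 h2]; split.
    by move: h1; rewrite !nonovE sees_h_sym sees_v_sym.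
  rewrite sE1 sE2 h2 /sees sees_h_sym sees_v_sym; tauto.
have okf : forall x, x \in A1 :|: A2 -> rect_ok (f x).
  move=> x x_in; case: (eqVneq x v) => [->|xv].
    by rewrite fv; have [h1 _] := ok1 v vA1; have [_ h2] := ok2 v vA2; split.
  case: (boolP (x \in A1)) => xA1.
    rewrite f1E //; have [h1 h2] := ok1 x xA1.
    by rewrite /rect_ok /rx1 /rx2 /ry1 /ry2 /shy /= in h1 h2 *; split; lra.
  have xA2 : x \in A2 by move: x_in; rewrite inE (negbTE xA1).
  rewrite f2E //; have [h1 h2] := ok2 x xA2.
  by rewrite /rect_ok !rsimp in h1 h2 *; split; lra.
have PvA1 : forall w, w \in A1 -> w != v -> P v w.
  move=> w hw hwv.
  have wA2 : w \notin A2 by apply/negP => h; move/eqP: hwv; apply; apply: both.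
  have okv : rect_ok (f v) by apply: okf; rewrite inE vA1.
  have okw : rect_ok (f w) by apply: okf; rewrite inE hw.
  have o1 := ok1 w hw; have o2 := ok1 v vA1.
  rewrite /P nonovE' // seesE // Eeq ?(eq_sym v) //.
  rewrite vA1 hw vA2 (negbTE wA2) /= trueP falseP seesE; try by apply: ok1.
  have bl := bl1 w hw hwv; rewrite sees_hE // in bl.
  have [h1 h2] := ok1 w hw; have [h3 h4] := ok1 v vA1; have [h5 h6] := ok2 v vA2.
  have [/andP[? ?] /andP[? ?]] := By1 w.
  have [/andP[? ?] /andP[? ?]] := By2 v.
  rewrite fv f1E // /t1 in okv okw *.
  case: ifP => hc; last (move/negbT: hc; rewrite -ltNge => hc);
  rewrite /rect_ok !rsimp /K in okv okw *; lra.
have PvA2 : forall w, w \in A2 -> w != v -> P v w.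
  move=> w hw hwv.
  have wA1 : w \notin A1 by apply/negP => h; move/eqP: hwv; apply; apply: both.
  have okv : rect_ok (f v) by apply: okf; rewrite inE vA1.
  have okw : rect_ok (f w) by apply: okf; rewrite inE hw orbT.
  have o1 := ok2 w hw; have o2 := ok2 v vA2.
  rewrite /P nonovE' // seesE // Eeq ?(eq_sym v) //.
  rewrite vA1 (negbTE wA1) vA2 hw /= trueP falseP seesE; try by apply: ok2.
  have bl := bl2 w hw hwv; rewrite sees_vE // in bl.
  have [h1 h2] := ok2 w hw; have [h3 h4] := ok1 v vA1; have [h5 h6] := ok2 v vA2.
  have [/andP[? ?] /andP[? ?]] := Bx2 w.
  have [/andP[? ?] /andP[? ?]] := Bx1 v.
  rewrite fv f2E // /t2 in okv okw *.
  case: ifP => hc; last (move/negbT: hc; rewrite -ltNge => hc);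
  rewrite /rect_ok !rsimp /K in okv okw *; lra.
have PA1 : forall x y, x \in A1 -> y \in A1 -> x != v -> y != v -> x != y -> P x y.
  move=> x y hx hy hxv hyv hxy.
  have xA2 : x \notin A2 by apply/negP => h; move/eqP: hxv; apply; apply: both.
  have yA2 : y \notin A2 by apply/negP => h; move/eqP: hyv; apply; apply: both.
  have okx : rect_ok (f x) by apply: okf; rewrite inE hx.
  have oky : rect_ok (f y) by apply: okf; rewrite inE hy.
  have o1 := ok1 x hx; have o2 := ok1 y hy; have o3 := ok1 v vA1.
  rewrite /P nonovE' // seesE // Eeq //.
  rewrite hx hy (negbTE xA2) /= trueP falseP seesE; try by apply: ok1.
  have blx := bl1 x hx hxv; rewrite sees_hE // in blx.
  have bly := bl1 y hy hyv; rewrite sees_hE // in bly.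
  have no := no1 x y hx hy hxy; rewrite nonovE' // in no.
  have [h1 h2] := ok1 x hx; have [h3 h4] := ok1 y hy; have [h5 h6] := ok1 v vA1.
  have [/andP[? ?] /andP[? ?]] := By1 x.
  have [/andP[? ?] /andP[? ?]] := By1 y.
  rewrite f1E // f1E // /t1 in okx oky *.
  case: ifP => hc; last (move/negbT: hc; rewrite -ltNge => hc);
  case: ifP => hc'; last (move/negbT: hc'; rewrite -ltNge => hc');
  rewrite /rect_ok !rsimp /K in okx oky *; lra.
have PA2 : forall x y, x \in A2 -> y \in A2 -> x != v -> y != v -> x != y -> P x y.
  move=> x y hx hy hxv hyv hxy.
  have xA1 : x \notin A1 by apply/negP => h; move/eqP: hxv; apply; apply: both.
  have yA1 : y \notin A1 by apply/negP => h; move/eqP: hyv; apply; apply: both.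
  have okx : rect_ok (f x) by apply: okf; rewrite inE hx orbT.
  have oky : rect_ok (f y) by apply: okf; rewrite inE hy orbT.
  have o1 := ok2 x hx; have o2 := ok2 y hy; have o3 := ok2 v vA2.
  rewrite /P nonovE' // seesE // Eeq //.
  rewrite hx hy (negbTE xA1) /= trueP falseP seesE; try by apply: ok2.
  have blx := bl2 x hx hxv; rewrite sees_vE // in blx.
  have bly := bl2 y hy hyv; rewrite sees_vE // in bly.
  have no := no2 x y hx hy hxy; rewrite nonovE' // in no.
  have [h1 h2] := ok2 x hx; have [h3 h4] := ok2 y hy; have [h5 h6] := ok2 v vA2.
  have [/andP[? ?] /andP[? ?]] := Bx2 x.
  have [/andP[? ?] /andP[? ?]] := Bx2 y.
  rewrite f2E // f2E // /t2 in okx oky *.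
  case: ifP => hc; last (move/negbT: hc; rewrite -ltNge => hc);
  case: ifP => hc'; last (move/negbT: hc'; rewrite -ltNge => hc');
  rewrite /rect_ok !rsimp /K in okx oky *; lra.
have PA12 : forall x y, x \in A1 -> y \in A2 -> x != v -> y != v -> P x y.
  move=> x y hx hy hxv hyv.
  have xA2 : x \notin A2 by apply/negP => h; move/eqP: hxv; apply; apply: both.
  have yA1 : y \notin A1 by apply/negP => h; move/eqP: hyv; apply; apply: both.
  have hxy : x != y by apply/eqP => e; move: hx; rewrite e (negbTE yA1).
  have okx : rect_ok (f x) by apply: okf; rewrite inE hx.
  have oky : rect_ok (f y) by apply: okf; rewrite inE hy orbT.
  rewrite /P nonovE' // seesE // Eeq //.
  rewrite (negbTE yA1) (negbTE xA2) andbF /= falseP.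
  have [h1 h2] := ok1 x hx; have [h3 h4] := ok2 y hy.
  have [/andP[? ?] /andP[? ?]] := By1 x.
  have [/andP[? ?] /andP[? ?]] := Bx1 x.
  have [/andP[? ?] /andP[? ?]] := By2 y.
  have [/andP[? ?] /andP[? ?]] := Bx2 y.
  rewrite f1E // f2E // /t1 /t2 in okx oky *.
  case: ifP => hc; last (move/negbT: hc; rewrite -ltNge => hc);
  case: ifP => hc'; last (move/negbT: hc'; rewrite -ltNge => hc');
  rewrite /rect_ok !rsimp /K in okx oky *; lra.
have Pall : forall x y, x \in A1 :|: A2 -> y \in A1 :|: A2 -> x != y -> P x y.
  move=> x y hx hy hxy.
  case: (eqVneq x v) => [exv|xv].
    subst x; have yv : y != v by rewrite eq_sym.
    by case/setUP: hy => hy; [apply: PvA1 | apply: PvA2].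
  case: (eqVneq y v) => [eyv|yv].
    subst y; apply: Psym.
    by case/setUP: hx => hx; [apply: PvA1 | apply: PvA2].
  case/setUP: hx => hx; case/setUP: hy => hy.
  - exact: PA1.
  - exact: PA12.
  - by apply: Psym; apply: PA12.
  - exact: PA2.
exists f; split; [exact: okf | split].
- by move=> x y hx hy hxy; have [] := Pall x y hx hy hxy.
- by move=> x y hx hy hxy; have [] := Pall x y hx hy hxy.
Qed.
Theorem lemma1 (T : finType) (A1 A2 : {set T}) (E1 E2 : rel T) (v : T) :
  simple_graph A1 E1 -> simple_graph A2 E2 ->
  A1 :&: A2 = [set v] ->
  (exists f1 : T -> rect, trv_rep A1 E1 f1 /\ blind_in_some_direction A1 f1 v) ->
  (exists f2 : T -> rect, trv_rep A2 E2 f2 /\ blind_in_some_direction A2 f2 v) ->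
  is_TRVG (A1 :|: A2) (fun x y => E1 x y || E2 x y).
Proof.
move=> g1 g2 hI [f1 [r1 [b1|b1]]] [f2 [r2 [b2|b2]]].
- exact: (core g1 g2 hI r1 b1 (trv_tr r2) b2).
- exact: (core g1 g2 hI r1 b1 r2 b2).
- apply: (is_TRVG_ext (E := fun x y => E2 x y || E1 x y)).
    by move=> x y; rewrite orbC.
  rewrite setUC; apply: (core g2 g1 _ r2 b2 r1 b1).
  by rewrite setIC.
- exact: (core g1 g2 hI (trv_tr r1) b1 r2 b2).
Qed.
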